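(* Let $$ \eta_u A^{(u)} = \left[\begin{array}{cccccc} \tau_1^2+\tau_s^2+\tau_c^2 & 2\tau_1\tau_s & 2\tau_1\tau_c & 2\tau_c\tau_s & 0 & 0\\ 2\tau_1\tau_s & \tau_1^2+\tau_s^2+\tau_c^2 & 2\tau_c\tau_s & 2\tau_1\tau_c & 0 & 0\\ 2\tau_1\tau_c & 2\tau_c\tau_s & \tau_1^2+\tau_s^2+\tau_c^2 & 2\tau_1\tau_s & 0 & 0\\ 2\tau_c\tau_s & 2\tau_1\tau_c & 2\tau_1\tau_s & \tau_1^2+\tau_s^2+\tau_c^2 & 0 & 0\\ 0 & 0 & 0 & 0 & 2\tau_1^2 & 2\tau_1^2\\ 0 & 0 & 0 & 0 & 2\tau_1^2 & 2\tau_1^2 \end{array}\right],$$ $$ A = \eta_u A^{(u)} + \left[\begin{array}{cccccc} (\tau_1+\tau_s)^2 & (\tau_1+\tau_s)^2 & \tau_c(\tau_1+\tau_s) & \tau_c(\tau_1+\tau_s) & 0 & 0\\ (\tau_1+\tau_s)^2 & (\tau_1+\tau_s)^2 & \tau_c(\tau_1+\tau_s) & \tau_c(\tau_1+\tau_s) & 0 & 0\\ \tau_c(\tau_1+\tau_s) & \tau_c(\tau_1+\tau_s) & \tau_c^2 & \tau_c^2 & 0 & 0\\ \tau_c(\tau_1+\tau_s) & \tau_c(\tau_1+\tau_s) & \tau_c^2 & \tau_c^2 & 0 & 0\\ 0 & 0 & 0 & 0 & 0 & 0\\ 0 & 0 & 0 & 0 & 0 & 0 \end{array}\right],$$ and assume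 $1 \gg \frac{\tau_c}{\tau_1} > \frac{\tau_s}{\tau_1} > 0$, $\frac{4}{9}\tau_c \le \tau_s \le \tau_c$ and $\tau_1+\tau_c+\tau_s = 1$. Let $D$ be the diagonal matrix with $D_{xx} = \sum_{x'} A_{xx'}$, and let $\lambda_1,\lambda_2,\lambda_3$ and $v_1,v_2,v_3$ be the largest three eigenvalues and corresponding eigenvectors of the normalized adjacency matrix $D^{-1/2} A D^{-1/2}$. Define $$\hat\lambda_1 = 1,\quad \hat\lambda_2 = 1,\quad \hat\lambda_3 = 1 - \frac{16}{3}\frac{\tau_c}{\tau_1},$$ $$\hat v_1 = [0,0,0,0,1,1],\quad \hat v_2 = [\sqrt{3},\sqrt{3},1,1,0,0],\quad \hat v_3 = [1,1,-\sqrt{3},-\sqrt{3},0,0].$$ Let $U = [v_1,v_2,v_3]$ and $\hat U = [\hat v_1,\hat v_2,\hat v_3]$. Then for $i\in\{1,2,3\}$, $|\lambda_i - \hat\lambda_i| \le O\big((\tfrac{\tau_c}{\tau_1})^2\big)$ and $\|\sin(U,\hat U)\|_F \le O\big(\tfrac{\tau_c}{\tau_1}\big)$, where $\sin(U,\hat U)$ denotes the matrix of sines of the principal angles between the column subspaces of $U$ and $\hat U$ (subspace distance between matrices with orthonormal columns).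
   Context: Toy example: six data points (nodes) — a red cube and a blue cube (known class, labeled), a red sphere and a blue sphere (novel class), and two gray cylinders (novel class). The augmentation probability $\mathcal{T}(x\mid\bar x)$ equals $\tau_1$ if $x$ and $\bar x$ share both color and shape, $\tau_c$ if they share color but not shape, $\tau_s$ if they share shape but not color, and $\tau_0 = 0$ otherwise. The unlabeled adjacency is $A^{(u)}_{xx'} = \mathbb{E}_{\bar x}\mathcal{T}(x\mid\bar x)\mathcal{T}(x'\mid\bar x)$ (with $\eta_u = 6$), and the label perturbation is $\eta_l \mathfrak{l}\mathfrak{l}^{\top}$ with $\eta_l = 4$ and $\mathfrak{l}_x = \mathbb{E}_{\bar x_l}\mathcal{T}(x\mid\bar x_l)$ averaged over the two labeled cubes, giving the second matrix above. *)

(* Defs.v *)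
From HB Require Import structures.
From mathcomp Require Import all_boot all_order all_algebra.
From mathcomp Require Import reals.
Set Implicit Arguments. Unset Strict Implicit. Unset Printing Implicit Defensive.
Import Order.TTheory GRing.Theory Num.Theory.
Local Open Scope ring_scope.

Section Toy.
Variable R : realType.


Definition mx_of_rows (rows : seq (seq R)) : 'M[R]_6 :=
  \matrix_(i < 6, j < 6) nth 0 (nth [::] rows i) j.

Definition etaAu (t1 tc ts : R) : 'M[R]_6 :=
  let a := t1 ^+ 2 + ts ^+ 2 + tc ^+ 2 in
  let p := 2 * t1 * ts in
  let q := 2 * t1 * tc in
  let s := 2 * tc * ts in
  let f := 2 * t1 ^+ 2 in
  mx_of_rows
  [:: [:: a; p; q; s; 0; 0];
      [:: p; a; s; q; 0; 0];
      [:: q; s; a; p; 0; 0];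
      [:: s; q; p; a; 0; 0];
      [:: 0; 0; 0; 0; f; f];
      [:: 0; 0; 0; 0; f; f]].

Definition labelPert (t1 tc ts : R) : 'M[R]_6 :=
  let b := (t1 + ts) ^+ 2 in
  let c := tc * (t1 + ts) in
  let e := tc ^+ 2 in
  mx_of_rows
  [:: [:: b; b; c; c; 0; 0];
      [:: b; b; c; c; 0; 0];
      [:: c; c; e; e; 0; 0];
      [:: c; c; e; e; 0; 0];
      [:: 0; 0; 0; 0; 0; 0];
      [:: 0; 0; 0; 0; 0; 0]].

Definition Amat (t1 tc ts : R) : 'M[R]_6 := etaAu t1 tc ts + labelPert t1 tc ts.

Definition degree (t1 tc ts : R) (x : 'I_6) : R := \sum_(x' < 6) Amat t1 tc ts x x'.

Definition Dinvsqrt (t1 tc ts : R) : 'M[R]_6 :=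
  diag_mx (\row_(x < 6) (Num.sqrt (degree t1 tc ts x))^-1).

Definition normAdj (t1 tc ts : R) : 'M[R]_6 :=
  Dinvsqrt t1 tc ts *m Amat t1 tc ts *m Dinvsqrt t1 tc ts.

(* hat lambda_1, hat lambda_2, hat lambda_3 (indexed 0,1,2) *)
Definition lamhat (t1 tc ts : R) (k : 'I_3) : R :=
  if val k == 2%N then 1 - (16%:R / 3%:R) * (tc / t1) else 1.

(* hat v_1, hat v_2, hat v_3 as columns of hat U *)
Definition Uhat : 'M[R]_(6, 3) :=
  \matrix_(i < 6, k < 3)
   nth 0 (nth [::] [:: [:: 0; 0; 0; 0; 1; 1];
                       [:: Num.sqrt 3%:R; Num.sqrt 3%:R; 1; 1; 0; 0];
                       [:: 1; 1; - Num.sqrt 3%:R; - Num.sqrt 3%:R; 0; 0]] k) i.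

Definition frob m n (M : 'M[R]_(m, n)) : R :=
  Num.sqrt (\sum_(i < m) \sum_(j < n) M i j ^+ 2).

Definition colnormalize m n (M : 'M[R]_(m, n)) : 'M[R]_(m, n) :=
  \matrix_(i < m, j < n) (M i j / Num.sqrt (\sum_(l < m) M l j ^+ 2)).

(* ||sin(U, W)||_F for U, W with orthonormal columns of the same number k:
   the Frobenius norm of (I - U U^T) W. *)
Definition sinF m k (U W : 'M[R]_(m, k)) : R :=
  frob ((1%:M - U *m U^T) *m W).

Definition first3 (V : 'M[R]_6) : 'M[R]_(6, 3) :=
  \matrix_(i < 6, k < 3) V i (widen_ord (isT : (3 <= 6)%N) k).

End Toy.

(* Main.v *)
Require Import Defs.
From HB Require Import structures.
From mathcomp Require Import all_boot all_order all_algebra.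
From mathcomp Require Import reals.
From mathcomp Require Import ring lra.
Import Order.TTheory GRing.Theory Num.Theory.
Local Open Scope ring_scope.

Notation o0 := (@Ordinal 6 0 isT).
Notation o1 := (@Ordinal 6 1 isT).
Notation o2 := (@Ordinal 6 2 isT).
Notation o3 := (@Ordinal 6 3 isT).
Notation o4 := (@Ordinal 6 4 isT).
Notation o5 := (@Ordinal 6 5 isT).
Notation k0 := (@Ordinal 3 0 isT).
Notation k1 := (@Ordinal 3 1 isT).
Notation k2 := (@Ordinal 3 2 isT).

Lemma sum6 (R : nmodType) (F : 'I_6 -> R) :
  \sum_(i < 6) F i = F o0 + F o1 + F o2 + F o3 + F o4 + F o5.
Proof.
rewrite !big_ord_recr big_ord0 /= add0r.
by congr (_ + _ + _ + _ + _ + _); congr F; apply: val_inj.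
Qed.

Lemma sum3 (R : nmodType) (F : 'I_3 -> R) :
  \sum_(i < 3) F i = F k0 + F k1 + F k2.
Proof.
rewrite !big_ord_recr big_ord0 /= add0r.
by congr (_ + _ + _); congr F; apply: val_inj.
Qed.

Lemma ord6P (P : 'I_6 -> Prop) : P o0 -> P o1 -> P o2 -> P o3 -> P o4 -> P o5 -> forall i, P i.
Proof.
by move=> H0 H1 H2 H3 H4 H5 [[|[|[|[|[|[|i]]]]]] Hi] //; rewrite (bool_irrelevance Hi isT).
Qed.

Lemma ord3P (P : 'I_3 -> Prop) : P k0 -> P k1 -> P k2 -> forall i, P i.
Proof.
by move=> H0 H1 H2 [[|[|[|i]]] Hi] //; rewrite (bool_irrelevance Hi isT).
Qed.


Lemma scalar_ident (R : realFieldType) (a : 'I_6 -> 'I_3 -> R) (mu : 'I_6 -> R) (l3 m : R) :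
  let nu := fun k : 'I_3 => if val k == 2%N then l3 else 1 in
  (forall k, \sum_(j<6) a j k ^+ 2 = 1) ->
  (forall j : 'I_6, \sum_(k<3) a j k ^+ 2 <= 1) ->
  (forall (j : 'I_6) (k : 'I_3), mu j * a j k = a j k * nu k) ->
  (forall j : 'I_6, (mu j - m) * (1 - \sum_(k<3) a j k ^+ 2) <= 0) ->
  (forall i j : 'I_6, (i <= j)%N -> mu j <= mu i) ->
  m < l3 -> l3 < 1 ->
  [/\ mu o0 = 1, mu o1 = 1, mu o2 = l3 & forall (j : 'I_6) (k : 'I_3), (3 <= j)%N -> a j k = 0].
Proof.
move=> nu hcol hrow hC hD hs hm hl.
have hz : forall j k, mu j != nu k -> a j k = 0.
  move=> j k ne; apply/eqP.
  have : (mu j - nu k) * a j k == 0 by rewrite mulrBl hC mulrC subrr.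
  by rewrite mulf_eq0 subr_eq0 (negbTE ne).
have nu0 : nu k0 = 1 by [].
have nu1 : nu k1 = 1 by [].
have nu2 : nu k2 = l3 by [].
have z1 : forall j, mu j != 1 -> a j k0 = 0 /\ a j k1 = 0.
  by move=> j h; split; apply: hz.
have z3 : forall j, mu j != l3 -> a j k2 = 0.
  by move=> j h; apply: hz.
have hmem : forall j, [\/ mu j = 1, mu j = l3 | mu j <= m].
  move=> j; case: (eqVneq (mu j) 1) => [|h1]; first by constructor 1.
  case: (eqVneq (mu j) l3) => [|h3]; first by constructor 2.
  constructor 3; have := hD j; rewrite sum3.
  have [-> ->] := z1 j h1; rewrite (z3 j h3).
  rewrite expr0n /= !addr0 subr0 mulr1; lra.
have hle1 : forall j, mu j <= 1.
  by move=> j; case: (hmem j) => h; lra.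
have hfull : forall j, m < mu j -> \sum_(k<3) a j k ^+ 2 = 1.
  move=> j hj; have := hD j; rewrite pmulr_rle0 ?subr_gt0 // => h.
  by apply/eqP; rewrite eq_le hrow /=; lra.
have sq0 : forall x : R, 0 <= x ^+ 2 by move=> x; apply: sqr_ge0.
have col0 := hcol k0; have col1 := hcol k1; have col2 := hcol k2.
rewrite sum6 in col0; rewrite sum6 in col1; rewrite sum6 in col2.
have s01 : (o0 <= o1)%N by []. have s12 : (o1 <= o2)%N by [].
have s23 : (o2 <= o3)%N by []. have s34 : (o3 <= o4)%N by []. have s45 : (o4 <= o5)%N by [].
have m01 := hs _ _ s01; have m12 := hs _ _ s12; have m23 := hs _ _ s23.
have m34 := hs _ _ s34; have m45 := hs _ _ s45.
have lt1 : forall j, mu j < 1 -> a j k0 = 0 /\ a j k1 = 0.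
  by move=> j h; apply: z1; rewrite lt_eqF.
have e0 : mu o0 = 1.
  apply/eqP; rewrite eq_le hle1 /=; rewrite leNgt; apply/negP => h.
  have h' : forall j, mu j < 1 by apply: ord6P; lra.
  move: col0; rewrite (lt1 _ (h' o0)).1 (lt1 _ (h' o1)).1 (lt1 _ (h' o2)).1
    (lt1 _ (h' o3)).1 (lt1 _ (h' o4)).1 (lt1 _ (h' o5)).1 expr0n /= !addr0.
  by move=> /eqP; rewrite eq_sym oner_eq0.
have e1 : mu o1 = 1.
  apply/eqP; rewrite eq_le hle1 /=; rewrite leNgt; apply/negP => h.
  have [a10 a11] := lt1 o1 ltac:(lra).
  have [a20 a21] := lt1 o2 ltac:(lra).
  have [a30 a31] := lt1 o3 ltac:(lra).
  have [a40 a41] := lt1 o4 ltac:(lra).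
  have [a50 a51] := lt1 o5 ltac:(lra).
  move: col0 col1; rewrite a10 a20 a30 a40 a50 a11 a21 a31 a41 a51 expr0n /= !addr0 => c0 c1.
  have := hrow o0; rewrite sum3 c0 c1.
  have := sq0 (a o0 k2); lra.
have e2 : mu o2 = l3.
  have n2 : mu o2 != 1.
    apply/eqP => h.
    have f0 := hfull o0 ltac:(lra). have f1 := hfull o1 ltac:(lra). have f2 := hfull o2 ltac:(lra).
    rewrite sum3 in f0; rewrite sum3 in f1; rewrite sum3 in f2.
    have b0 : a o0 k2 = 0 by apply: z3; apply/eqP; lra.
    have b1 : a o1 k2 = 0 by apply: z3; apply/eqP; lra.
    have b2 : a o2 k2 = 0 by apply: z3; apply/eqP; lra.
    move: f0 f1 f2; rewrite b0 b1 b2 expr0n /= !addr0 => f0 f1 f2.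
    have := sq0 (a o3 k0); have := sq0 (a o4 k0); have := sq0 (a o5 k0).
    have := sq0 (a o3 k1); have := sq0 (a o4 k1); have := sq0 (a o5 k1).
    lra.
  case: (hmem o2) => // h; first by rewrite h eqxx in n2.
  have h' : forall j, mu j != l3.
    apply: ord6P; apply/eqP; lra.
  move: col2; rewrite (z3 _ (h' o0)) (z3 _ (h' o1)) (z3 _ (h' o2))
    (z3 _ (h' o3)) (z3 _ (h' o4)) (z3 _ (h' o5)) expr0n /= !addr0.
  by move=> /eqP; rewrite eq_sym oner_eq0.
split=> //.
have a2 : a o2 k2 ^+ 2 = 1.
  have f2 := hfull o2 ltac:(lra); rewrite sum3 in f2.
  have [b0 b1] := lt1 o2 ltac:(lra); move: f2.
  by rewrite b0 b1 expr0n /= !add0r.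
have key : forall j : 'I_6, (3 <= j)%N -> a j k0 = 0 /\ a j k1 = 0 /\ a j k2 = 0.
  apply: ord6P => hj //.
  - have [-> ->] := lt1 o3 ltac:(lra); split=> //; split=> //.
    apply: z3; apply/eqP => h.
    have f := hfull o3 ltac:(lra); rewrite sum3 in f; move: f.
    have [-> ->] := lt1 o3 ltac:(lra); rewrite expr0n /= !add0r => f.
    have := sq0 (a o0 k2); have := sq0 (a o1 k2); have := sq0 (a o4 k2); have := sq0 (a o5 k2).
    lra.
  - have [-> ->] := lt1 o4 ltac:(lra); split=> //; split=> //.
    apply: z3; apply/eqP => h.
    have f := hfull o4 ltac:(lra); rewrite sum3 in f; move: f.
    have [-> ->] := lt1 o4 ltac:(lra); rewrite expr0n /= !add0r => f.
    have := sq0 (a o0 k2); have := sq0 (a o1 k2); have := sq0 (a o3 k2); have := sq0 (a o5 k2).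
    lra.
  - have [-> ->] := lt1 o5 ltac:(lra); split=> //; split=> //.
    apply: z3; apply/eqP => h.
    have f := hfull o5 ltac:(lra); rewrite sum3 in f; move: f.
    have [-> ->] := lt1 o5 ltac:(lra); rewrite expr0n /= !add0r => f.
    have := sq0 (a o0 k2); have := sq0 (a o1 k2); have := sq0 (a o3 k2); have := sq0 (a o4 k2).
    lra.
move=> j k hj; have [h0 [h1 h2]] := key j hj.
by move: k; apply: ord3P.
Qed.


Lemma mat_ident (R : realFieldType) (N V : 'M[R]_6) (mu : 'I_6 -> R) (W : 'M[R]_(6,3)) (l3 m : R) :
  let nu := fun k : 'I_3 => if val k == 2%N then l3 else 1 in
  V^T *m V = 1%:M ->
  N = V *m diag_mx (\row_i mu i) *m V^T ->
  (forall i j : 'I_6, (i <= j)%N -> mu j <= mu i) ->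
  W^T *m W = 1%:M ->
  N *m W = W *m diag_mx (\row_k nu k) ->
  (forall X : 'M[R]_6, W^T *m X = 0 -> forall j, (X^T *m N *m X) j j <= m * (X^T *m X) j j) ->
  m < l3 -> l3 < 1 ->
  [/\ mu o0 = 1, mu o1 = 1, mu o2 = l3 &
     forall (j : 'I_6) (k : 'I_3), (3 <= j)%N -> (V^T *m W) j k = 0].
Proof.
move=> nu hV hN hs hW hNW hX hm hl.
set A := V^T *m W.
have hVV : V *m V^T = 1%:M := mulmx1C hV.
set Dm := diag_mx (\row_i mu i).
set Dn := diag_mx (\row_k nu k).
have hAt : A^T = W^T *m V by rewrite /A trmx_mul trmxK.
have hAtA : A^T *m A = 1%:M.
  by rewrite hAt /A mulmxA -(mulmxA W^T) hVV mulmx1 hW.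
have e1 : V^T *m N = Dm *m V^T.
  by rewrite hN !mulmxA hV mul1mx.
have hDA : Dm *m A = A *m Dn.
  have -> : Dm *m A = V^T *m N *m W by rewrite e1 -mulmxA.
  by rewrite -mulmxA hNW mulmxA.
set Rm := V - W *m A^T.
have hRt : Rm^T = V^T - A *m W^T by rewrite /Rm linearB /= trmx_mul trmxK.
have hRR : Rm^T *m Rm = 1%:M - A *m A^T.
  rewrite hRt /Rm mulmxBl !mulmxBr hV mulmxA -/A -!mulmxA -hAt (mulmxA W^T W) hW mul1mx.
  by rewrite subrr subr0.
have hWR : W^T *m Rm = 0.
  by rewrite /Rm mulmxBr -hAt mulmxA hW mul1mx subrr.
have hNV : N *m V = V *m Dm.
  by rewrite hN -!mulmxA hV mulmx1.
have hDt : Dm^T = Dm by rewrite /Dm tr_diag_mx.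
have hNR : N *m Rm = Rm *m Dm.
  rewrite /Rm mulmxBr mulmxBl hNV mulmxA hNW -mulmxA.
  have -> : Dn *m A^T = A^T *m Dm.
    by rewrite -[Dn]tr_diag_mx -trmx_mul -hDA trmx_mul hDt.
  by rewrite mulmxA.
have hRjj : forall j, (Rm^T *m Rm) j j = 1 - \sum_(k<3) A j k ^+ 2.
  move=> j; rewrite hRR !mxE eqxx /=; congr (_ - _).
  by apply: eq_bigr => k _; rewrite [A^T _ _]mxE expr2.
apply: (@scalar_ident R (fun j k => A j k) mu l3 m) => //.
- move=> k; have := congr1 (fun M : 'M[R]_3 => M k k) hAtA; rewrite !mxE eqxx /= => h; apply: etrans h; apply: esym.
  by apply: eq_bigr => j _; rewrite [A^T _ _]mxE expr2.
- move=> j; rewrite -subr_ge0 -hRjj !mxE.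
  by apply: sumr_ge0 => i _; rewrite mxE -expr2 sqr_ge0.
- move=> j k; have := congr1 (fun M : 'M[R]_(6,3) => M j k) hDA.
  by rewrite mul_mx_diag mul_diag_mx !mxE.
- move=> j; have := hX Rm hWR j; rewrite -mulmxA hNR mulmxA mul_mx_diag mxE hRjj mxE.
  move=> h; rewrite mulrC mulrBl; lra.
Qed.


Definition ss {R : realType} {m n} (M : 'M[R]_(m,n)) := \sum_(i < m) \sum_(j < n) M i j ^+ 2.

Lemma ssE (R : realType) m n (M : 'M[R]_(m,n)) : ss M = \tr (M *m M^T).
Proof.
rewrite /ss /mxtrace; apply: eq_bigr => i _; rewrite mxE.
by apply: eq_bigr => j _; rewrite mxE expr2.
Qed.

Lemma ss_ge0 (R : realType) m n (M : 'M[R]_(m,n)) : 0 <= ss M.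
Proof. by apply: sumr_ge0 => i _; apply: sumr_ge0 => j _; apply: sqr_ge0. Qed.

Lemma proj_ss (R : realType) m k n (U : 'M[R]_(m,k)) (Z : 'M[R]_(m,n)) :
  U^T *m U = 1%:M -> ss ((1%:M - U *m U^T) *m Z) <= ss Z.
Proof.
move=> hU; set P := 1%:M - U *m U^T.
have hPt : P^T = P by rewrite /P linearB /= trmx1 trmx_mul trmxK.
have hPP : P *m P = P.
  rewrite /P mulmxBl mul1mx mulmxBr mulmx1 !mulmxA -(mulmxA U) hU mulmx1.
  by rewrite subrr subr0.
rewrite !ssE trmx_mul hPt mulmxA -mulmxA mxtrace_mulC mulmxA -(mulmxA Z^T) hPP.
rewrite /P mulmxBr mulmx1 mulmxBl linearB /= (mxtrace_mulC Z^T) lerBlDr lerDl.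
have -> : Z^T *m (U *m U^T) *m Z = (U^T *m Z)^T *m (U^T *m Z) by rewrite trmx_mul trmxK !mulmxA.
by rewrite mxtrace_mulC -ssE ss_ge0.
Qed.

Lemma sin_le (R : realType) (V : 'M[R]_6) (W What : 'M[R]_(6,3)) :
  V^T *m V = 1%:M ->
  (forall (j : 'I_6) (k : 'I_3), (3 <= j)%N -> (V^T *m W) j k = 0) ->
  sinF (first3 V) What <= frob (What - W).
Proof.
move=> hV hA; set U := first3 V.
have ew : forall k l : 'I_3,
    (widen_ord (isT : (3 <= 6)%N) k == widen_ord (isT : (3 <= 6)%N) l) = (k == l).
  by move=> k l; apply/eqP/eqP => [h|->//]; apply: val_inj; exact: (congr1 val h).
have hU : U^T *m U = 1%:M.
  apply/matrixP => k l.
  have := congr1 (fun M : 'M[R]_6 => M (widen_ord (isT : (3 <= 6)%N) k) (widen_ord (isT : (3 <= 6)%N) l)) hV.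
  rewrite !mxE ew => <-.
  by apply: eq_bigr => i _; rewrite !mxE.
have w0 : widen_ord (isT : (3 <= 6)%N) k0 = o0 by apply: val_inj.
have w1 : widen_ord (isT : (3 <= 6)%N) k1 = o1 by apply: val_inj.
have w2 : widen_ord (isT : (3 <= 6)%N) k2 = o2 by apply: val_inj.
have hPW : (1%:M - U *m U^T) *m W = 0.
  rewrite mulmxBl mul1mx; apply/eqP; rewrite subr_eq0; apply/eqP.
  have hVV := mulmx1C hV.
  rewrite -{1}(mul1mx W) -hVV -!mulmxA.
  apply/matrixP => i k; rewrite mxE [in RHS]mxE sum6 sum3.
  rewrite (hA o3 k isT) (hA o4 k isT) (hA o5 k isT) !mulr0 !addr0.
  have eU : forall l, U i l = V i (widen_ord (isT : (3 <= 6)%N) l) by move=> l; rewrite mxE.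
  have eUW : forall l, (U^T *m W) l k = (V^T *m W) (widen_ord (isT : (3 <= 6)%N) l) k.
    by move=> l; rewrite !mxE; apply: eq_bigr => j _; rewrite !mxE.
  by rewrite !eU !eUW w0 w1 w2.
rewrite /sinF.
have -> : (1%:M - U *m U^T) *m What = (1%:M - U *m U^T) *m (What - W).
  by rewrite mulmxBr hPW subr0.
apply: ler_wsqrtr; exact: proj_ss.
Qed.


Definition dg {R : realType} (t1 tc : R) (i : 'I_6) : R :=
  if (i < 2)%N then 3 - 2 * tc else if (i < 4)%N then 1 + 2 * tc else 4 * t1 ^+ 2.

Definition Gm {R : realType} (tc : R) : 'M[R]_(6,3) :=
  \matrix_(i < 6, k < 3) nth 0 (nth [::]
    [:: [:: 0; 1; (3 - 2 * tc)^-1]; [:: 0; 1; (3 - 2 * tc)^-1];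
        [:: 0; 1; - (1 + 2 * tc)^-1]; [:: 0; 1; - (1 + 2 * tc)^-1];
        [:: 1; 0; 0]; [:: 1; 0; 0]] i) k.

Definition l3 {R : realType} (tc : R) : R :=
  1 - 16 * tc * (1 - tc) / ((3 - 2 * tc) * (1 + 2 * tc)).

Definition nu {R : realType} (l : R) (k : 'I_3) : R := if val k == 2%N then l else 1.

Lemma degE (R : realType) (t1 tc ts : R) : t1 + tc + ts = 1 ->
  forall i, degree t1 tc ts i = dg t1 tc i.
Proof.
move=> h; have {h}-> : t1 = 1 - tc - ts by lra.
by apply: ord6P; rewrite /dg /degree sum6 /Amat /etaAu /labelPert /mx_of_rows !mxE /=; ring.
Qed.

Lemma C1 (R : realType) (t1 tc ts : R) : t1 + tc + ts = 1 -> 0 <= tc < 1 ->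
  Amat t1 tc ts *m Gm tc = diag_mx (\row_i dg t1 tc i) *m Gm tc *m diag_mx (\row_k nu (l3 tc) k).
Proof.
move=> h /andP[h0 h1]; have {h}-> : t1 = 1 - tc - ts by lra.
have n1 : 3 - 2 * tc != 0 by apply/eqP; lra.
have n3 : 1 + 2 * tc != 0 by apply/eqP; lra.
apply/matrixP => i k; rewrite mul_mx_diag mul_diag_mx !mxE sum6.
move: i; apply: ord6P; move: k; apply: ord3P;
  rewrite /Gm /Amat /etaAu /labelPert /mx_of_rows /dg /nu /l3 !mxE /=;
  field; rewrite ?n1 ?n3 //.
Qed.

Definition kap {R : realType} (t1 tc : R) (k : 'I_3) : R :=
  if val k == 0%N then 8 * t1 ^+ 2 else if val k == 1%N then 8 else 8 / ((3 - 2 * tc) * (1 + 2 * tc)).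

Lemma C2 (R : realType) (t1 tc : R) : 0 <= tc < 1 ->
  (Gm tc)^T *m diag_mx (\row_i dg t1 tc i) *m Gm tc = diag_mx (\row_k kap t1 tc k).
Proof.
move=> /andP[h0 h1].
have n1 : 3 - 2 * tc != 0 by apply/eqP; lra.
have n3 : 1 + 2 * tc != 0 by apply/eqP; lra.
apply/matrixP => i k; rewrite mul_mx_diag !mxE sum6.
move: i; apply: ord3P; move: k; apply: ord3P;
  rewrite /Gm /dg /kap !mxE /=;
  field; rewrite ?n1 ?n3 //.
Qed.

Lemma quadform (R : realFieldType) (a b d1 d3 d5 m y w v : R) :
  0 < m * d1 - a -> 0 <= m * d3 - a -> b ^+ 2 <= (m * d1 - a) * (m * d3 - a) ->
  0 <= m -> 0 <= d5 ->
  2 * a * (y ^+ 2 + w ^+ 2) + 4 * b * y * w <= m * (2 * d1 * y ^+ 2 + 2 * d3 * w ^+ 2 + 2 * d5 * v ^+ 2).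
Proof.
set P := m * d1 - a; set Q := m * d3 - a => hP hQ hPQ hm hd5.
have h1 : 0 <= P * (P * y ^+ 2 + Q * w ^+ 2 - 2 * b * y * w).
  have -> : P * (P * y ^+ 2 + Q * w ^+ 2 - 2 * b * y * w) = (P * y - b * w) ^+ 2 + (P * Q - b ^+ 2) * w ^+ 2.
    by ring.
  by apply: addr_ge0; [apply: sqr_ge0 | apply: mulr_ge0; [lra | apply: sqr_ge0]].
have h2 : 0 <= P * y ^+ 2 + Q * w ^+ 2 - 2 * b * y * w.
  by move: h1; rewrite pmulr_rge0.
have h3 : 0 <= m * d5 * v ^+ 2 by apply: mulr_ge0; [apply: mulr_ge0|apply: sqr_ge0].
rewrite /P /Q in h2; lra.
Qed.

Lemma C3 (R : realType) (t1 tc ts m : R) : t1 + tc + ts = 1 -> 0 <= tc < 1 -> 0 < t1 ->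
  0 < m * (3 - 2 * tc) - ((t1 - ts) ^+ 2 + tc ^+ 2) ->
  0 <= m * (1 + 2 * tc) - ((t1 - ts) ^+ 2 + tc ^+ 2) ->
  (2 * tc * (t1 - ts)) ^+ 2 <= (m * (3 - 2 * tc) - ((t1 - ts) ^+ 2 + tc ^+ 2)) *
                               (m * (1 + 2 * tc) - ((t1 - ts) ^+ 2 + tc ^+ 2)) ->
  0 <= m ->
  forall Z : 'M[R]_6, (Gm tc)^T *m diag_mx (\row_i dg t1 tc i) *m Z = 0 ->
  forall j, (Z^T *m Amat t1 tc ts *m Z) j j <= m * (Z^T *m diag_mx (\row_i dg t1 tc i) *m Z) j j.
Proof.
move=> h /andP[h0 h1] ht1 hP hQ hPQ hm Z hZ j.
have n1 : 3 - 2 * tc != 0 by apply/eqP; lra.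
have n3 : 1 + 2 * tc != 0 by apply/eqP; lra.
have e0 := congr1 (fun M : 'M[R]_(3,6) => M k0 j) hZ.
have e1 := congr1 (fun M : 'M[R]_(3,6) => M k1 j) hZ.
have e2 := congr1 (fun M : 'M[R]_(3,6) => M k2 j) hZ.
rewrite /= mul_mx_diag !mxE !sum6 /Gm /dg ?mxE /= in e0 e1 e2.
rewrite !mulNr !mulVf // in e2.
rewrite mul_mx_diag !mxE !sum6 !mxE !sum6 ?mxE /Amat /etaAu /labelPert /mx_of_rows /dg ?mxE /=.
have f5 : Z o5 j = - Z o4 j.
  have : (4 * t1 ^+ 2) * (Z o4 j + Z o5 j) = 0 by rewrite -[RHS]e0; ring.
  move/eqP; rewrite mulf_eq0 => /orP[/eqP|/eqP]; last by lra.
  move=> ht; have : t1 ^+ 2 = 0 by lra.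
  by move/eqP; rewrite expf_eq0 /= => /eqP; lra.
have f3 : Z o3 j = Z o0 j + Z o1 j - Z o2 j by lra.
rewrite f3 in e1.
have f1 : Z o1 j = - Z o0 j.
  have : 4 * (Z o0 j + Z o1 j) = 0 by rewrite -[RHS]e1; ring.
  lra.
rewrite f1 in f3.
rewrite f5 f3 f1.
have := @quadform R ((t1 - ts) ^+ 2 + tc ^+ 2) (2 * tc * (t1 - ts)) (3 - 2 * tc)
   (1 + 2 * tc) (4 * t1 ^+ 2) m (Z o0 j) (Z o2 j) (Z o4 j) hP hQ hPQ hm.
move=> H; have {}H := H ltac:(apply: mulr_ge0; [lra|apply: sqr_ge0]).
have HH : forall x y : R, x = y -> x <= y by move=> x y ->.
apply: (le_trans _ (le_trans H _)); apply: HH; ring.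
Qed.


Lemma numeric (R : realType) (e s : R) : 0 < s -> s <= e -> 4 * e <= 9 * s -> e < 1 / 1000 ->
  let t1 := 1 - e - s in let m := l3 e - e / 9 in let a := (t1 - s) ^+ 2 + e ^+ 2 in
  [/\ 0 < m * (3 - 2 * e) - a, 0 <= m * (1 + 2 * e) - a,
      (2 * e * (t1 - s)) ^+ 2 <= (m * (3 - 2 * e) - a) * (m * (1 + 2 * e) - a),
      0 <= m & m < l3 e /\ l3 e < 1].
Proof.
move=> hs hse h49 he t1 m a.
have n1 : 3 - 2 * e != 0 by apply/eqP; lra.
have n3 : 1 + 2 * e != 0 by apply/eqP; lra.
have p1 : 0 < 3 - 2 * e by lra.
have p3 : 0 < 1 + 2 * e by lra.
have es1 : e * s <= e * e by nra.
have ss1 : s * s <= e * e by nra.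
have ee : e * e <= e / 1000 by nra.
have e3 : 0 <= e * e * e by nra.
have e2s : 0 <= e * e * s by nra.
have es2 : 0 <= e * s * s by nra.
have eQ : (m * (1 + 2 * e) - a) * (3 - 2 * e) =
   (1 - e / 9) * (1 + 2 * e) * (3 - 2 * e) - 16 * e * (1 - e) - a * (3 - 2 * e).
  by rewrite /m /l3; field; rewrite n1 n3.
have eP : (m * (3 - 2 * e) - a) * (1 + 2 * e) =
   (1 - e / 9) * (1 + 2 * e) * (3 - 2 * e) - 16 * e * (1 - e) - a * (1 + 2 * e).
  by rewrite /m /l3; field; rewrite n1 n3.
have eM : m * ((1 + 2 * e) * (3 - 2 * e)) =
   (1 - e / 9) * (1 + 2 * e) * (3 - 2 * e) - 16 * e * (1 - e).
  by rewrite /m /l3; field; rewrite n1 n3.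
have eL : (1 - l3 e) * ((3 - 2 * e) * (1 + 2 * e)) = 16 * e * (1 - e).
  by rewrite /l3; field; rewrite n1 n3.
have Qb : e / 2 <= (m * (1 + 2 * e) - a) * (3 - 2 * e).
  rewrite eQ /a /t1; lra.
have e3u : e * e * e <= e * e by nra.
have ee0 : 0 <= e * e by nra.
have es0 : 0 <= e * s by nra.
have e2su : e * e * s <= e * e by nra.
have es2u : e * s * s <= e * e by nra.
have Pb : 1 + 2 * e <= (m * (3 - 2 * e) - a) * (1 + 2 * e).
  rewrite eP /a /t1; lra.
have P1 : 1 <= m * (3 - 2 * e) - a by nra.
have Q6 : e / 6 <= m * (1 + 2 * e) - a by nra.
have ts1 : (t1 - s) ^+ 2 <= 1.
  have h0 : 0 <= t1 - s by rewrite /t1; lra.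
  have h1 : t1 - s <= 1 by rewrite /t1; lra.
  rewrite expr2; nra.
have m0 : 0 <= m.
  have : 0 <= m * ((1 + 2 * e) * (3 - 2 * e)) by rewrite eM; lra.
  by rewrite pmulr_lge0 //; apply: mulr_gt0.
have l1 : l3 e < 1.
  have : 0 < (1 - l3 e) * ((3 - 2 * e) * (1 + 2 * e)) by rewrite eL; nra.
  by rewrite pmulr_lgt0 ?subr_gt0 //; apply: mulr_gt0.
split=> //; first lra.
- lra.
- have -> : (2 * e * (t1 - s)) ^+ 2 = 4 * (e * e) * (t1 - s) ^+ 2 by ring.
  nra.
- split=> //; rewrite /m; lra.
Qed.

Lemma lam_bound (R : realType) (e s : R) : 0 < s -> s <= e -> e < 1 / 1000 ->
  `|l3 e - (1 - 16%:R / 3%:R * (e / (1 - e - s)))| <= 100 * (e / (1 - e - s)) ^+ 2.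
Proof.
move=> hs hse he.
have n1 : 3 - 2 * e != 0 by apply/eqP; lra.
have n3 : 1 + 2 * e != 0 by apply/eqP; lra.
have nt : 1 - e - s != 0 by apply/eqP; lra.
have pt : 0 < 1 - e - s by lra.
set x := e / (1 - e - s).
have hx : x * (1 - e - s) = e by rewrite /x divfK.
have x0 : 0 <= x by rewrite /x; apply: divr_ge0; lra.
have ex : e <= x by nra.
have eA : (16 * e / 3 - (1 - l3 e)) * (3 * ((3 - 2 * e) * (1 + 2 * e))) = 16 * e ^+ 2 * (7 - 4 * e).
  by rewrite /l3; field; rewrite n1 n3.
have p : 0 < 3 * ((3 - 2 * e) * (1 + 2 * e)) by apply: mulr_gt0; [lra| apply: mulr_gt0; lra].
have A0 : 0 <= 16 * e / 3 - (1 - l3 e).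
  have : 0 <= (16 * e / 3 - (1 - l3 e)) * (3 * ((3 - 2 * e) * (1 + 2 * e))).
    by rewrite eA; apply: mulr_ge0; [apply: mulr_ge0; [lra|apply: sqr_ge0]| lra].
  by rewrite pmulr_lge0.
have A1 : 16 * e / 3 - (1 - l3 e) <= 14 * e ^+ 2.
  have h8 : 8 <= 3 * ((3 - 2 * e) * (1 + 2 * e)) by nra.
  have e20 : 0 <= e ^+ 2 by apply: sqr_ge0.
  nra.
have B : x - e = x * (e + s) by lra.
have B0 : 0 <= x * (e + s) by apply: mulr_ge0; lra.
have B1 : x * (e + s) <= 2 * x ^+ 2 by rewrite expr2; nra.
have -> : l3 e - (1 - 16%:R / 3%:R * x) = 16%:R / 3%:R * (x - e) + (16 * e / 3 - (1 - l3 e)).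
  by field.
have e2x : e ^+ 2 <= x ^+ 2 by rewrite !expr2; nra.
rewrite ger0_norm; last by rewrite B; lra.
rewrite B; lra.
Qed.


Lemma L0 (R : realType) (x y a : R) : x != 0 -> y != 0 -> a = x ^+ 2 * y ^+ 2 -> (x * y)^-1 * a / (x * y) = 1.
Proof. by move=> hx hy ->; field; rewrite hx hy. Qed.

Lemma L1 (R : realType) (r : R) : r != 0 -> r ^+ 2 = 8 -> r^-1 * 8 / r = 1.
Proof. by move=> hr <-; field. Qed.

Lemma L2 (R : realType) (p q r d1 d3 : R) : r != 0 -> d1 != 0 -> d3 != 0 -> p ^+ 2 = d1 -> q ^+ 2 = d3 ->
  r ^+ 2 = 8 -> p * q / r * (8 / (d1 * d3)) * (p * q / r) = 1.
Proof.
move=> hr h1 h3 hp hq h8; rewrite -h8 -hp -hq.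
have p0 : p != 0 by apply: contraNneq h1 => e; rewrite -hp e expr0n.
have q0 : q != 0 by apply: contraNneq h3 => e; rewrite -hq e expr0n.
by field; rewrite ?p0 ?q0 ?hr.
Qed.

Theorem theorem6 (R : realType) :
  exists (C delta : R), 0 < delta /\
  forall t1 tc ts : R,
    0 < t1 -> 0 < ts / t1 -> ts / t1 < tc / t1 ->
    (4%:R / 9%:R) * tc <= ts -> ts <= tc ->
    t1 + tc + ts = 1 ->
    tc / t1 < delta ->
    forall (V : 'M[R]_6) (mu : 'I_6 -> R),
      V^T *m V = 1%:M ->
      normAdj t1 tc ts = V *m diag_mx (\row_i mu i) *m V^T ->
      (forall i j : 'I_6, (i <= j)%N -> mu j <= mu i) ->
      (forall k : 'I_3,
         `|mu (widen_ord (isT : (3 <= 6)%N) k) - lamhat t1 tc ts k|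
           <= C * (tc / t1) ^+ 2) /\
      sinF (first3 V) (colnormalize (Uhat R)) <= C * (tc / t1).
Proof.
exists 100, (1 / 1000); split; first lra.
move=> t1 tc ts ht1 hst hts h49 hse hsum hdel V mu hV hN hsort.
have nt1 : t1 != 0 by rewrite gt_eqF.
have hs : 0 < ts by have := mulr_gt0 hst ht1; rewrite divfK.
have hct : ts < tc.
  have : 0 < (tc / t1 - ts / t1) * t1 by apply: mulr_gt0; rewrite ?subr_gt0.
  by rewrite mulrBl !divfK // subr_gt0.
have hx : tc / t1 * t1 = tc by rewrite divfK.
have he : tc < 1 / 1000 by nra.
have h49' : 4 * tc <= 9 * ts by lra.
have x0 : 0 <= tc / t1 by apply: divr_ge0; lra.
have ext : tc <= tc / t1 by nra.
have et1 : t1 = 1 - tc - ts by lra.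
subst t1.
set t1 := 1 - tc - ts.
have hdeg := @degE R t1 tc ts hsum.
have dpos : forall i, 0 < dg t1 tc i.
  by apply: ord6P; rewrite /dg /=; try lra; apply: mulr_gt0; try lra; apply: exprn_gt0; rewrite /t1; lra.
pose sq i := Num.sqrt (dg t1 tc i).
have sqpos : forall i, 0 < sq i by move=> i; rewrite sqrtr_gt0.
have sqn0 : forall i, sq i != 0 by move=> i; rewrite gt_eqF.
have sq2 : forall i, sq i ^+ 2 = dg t1 tc i by move=> i; rewrite sqr_sqrtr // ltW.
set Sq := diag_mx (\row_i sq i).
set Sqi := diag_mx (\row_i (sq i)^-1).
set Dm := diag_mx (\row_i dg t1 tc i).
have hNE : normAdj t1 tc ts = Sqi *m Amat t1 tc ts *m Sqi.
  rewrite /normAdj; have -> : Dinvsqrt t1 tc ts = Sqi.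
    by rewrite /Dinvsqrt /Sqi; congr diag_mx; apply/rowP => i; rewrite !mxE hdeg.
  by [].
have hSS : Sq *m Sq = Dm.
  by rewrite mulmx_diag; congr diag_mx; apply/rowP => i; rewrite !mxE -expr2 sq2.
have hSiS : Sqi *m Sq = 1%:M.
  by rewrite mulmx_diag -diag_const_mx; congr diag_mx; apply/rowP => i; rewrite !mxE mulVf.
have hSSi : Sq *m Sqi = 1%:M.
  by rewrite mulmx_diag -diag_const_mx; congr diag_mx; apply/rowP => i; rewrite !mxE mulfV.
have hSqt : Sq^T = Sq by rewrite tr_diag_mx.
have hSqit : Sqi^T = Sqi by rewrite tr_diag_mx.
pose c (k : 'I_3) : R := if val k == 0%N then (Num.sqrt 2 * sq o4)^-1
   else if val k == 1%N then (Num.sqrt 8)^-1 else sq o0 * sq o2 / Num.sqrt 8.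
have r2p : 0 < Num.sqrt (2 : R) by rewrite sqrtr_gt0; lra.
have r8p : 0 < Num.sqrt (8 : R) by rewrite sqrtr_gt0; lra.
have r22 : Num.sqrt (2 : R) ^+ 2 = 2 by rewrite sqr_sqrtr //; lra.
have r82 : Num.sqrt (8 : R) ^+ 2 = 8 by rewrite sqr_sqrtr //; lra.
have cn0 : forall k, c k != 0.
  apply: ord3P; rewrite /c /=.
  - by rewrite invr_eq0 mulf_neq0 // gt_eqF.
  - by rewrite invr_eq0 gt_eqF.
  - by rewrite mulf_neq0 ?invr_eq0 ?gt_eqF // mulr_gt0.
set Cm := diag_mx (\row_k c k).
set Cmi := diag_mx (\row_k (c k)^-1).
have hCiC : Cmi *m Cm = 1%:M.
  by rewrite mulmx_diag -diag_const_mx; congr diag_mx; apply/rowP => i; rewrite !mxE mulVf.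
have hCt : Cm^T = Cm by rewrite tr_diag_mx.
set W := Sq *m Gm tc *m Cm.
have hWt : W^T = Cm *m (Gm tc)^T *m Sq by rewrite /W !trmx_mul hCt hSqt mulmxA.
have hc01 : 0 <= tc < 1 by apply/andP; split; lra.
have hWW : W^T *m W = 1%:M.
  rewrite hWt /W !mulmxA -(mulmxA _ Sq Sq) hSS.
  have -> : Cm *m (Gm tc)^T *m Dm *m Gm tc *m Cm = Cm *m ((Gm tc)^T *m Dm *m Gm tc) *m Cm by rewrite !mulmxA.
  rewrite (@C2 R t1 tc hc01).
  rewrite !mulmx_diag -diag_const_mx; congr diag_mx; apply/rowP.
  apply: ord3P; rewrite !mxE /c /kap /=.
  - apply: L0; rewrite ?gt_eqF // r22 sq2 /dg /=; ring.
  - by apply: L1; rewrite ?gt_eqF.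
  - apply: L2; rewrite ?sq2 // ?gt_eqF //; lra.
have hNW : normAdj t1 tc ts *m W = W *m diag_mx (\row_k nu (l3 tc) k).
  rewrite hNE /W.
  have -> : Sqi *m Amat t1 tc ts *m Sqi *m (Sq *m Gm tc *m Cm) = Sqi *m (Amat t1 tc ts *m Gm tc) *m Cm.
    by rewrite !mulmxA -(mulmxA _ Sqi Sq) hSiS mulmx1.
  rewrite (@C1 R t1 tc ts hsum hc01) -/Dm -hSS !mulmxA hSiS mul1mx -!mulmxA.
  by rewrite (diag_mxC (\row_k nu (l3 tc) k)).
have [hP hQ hPQ hm0 [hml hl1]] := @numeric R tc ts hs hse h49' he.
have hX : forall X : 'M[R]_6, W^T *m X = 0 -> forall j,
    (X^T *m normAdj t1 tc ts *m X) j j <= (l3 tc - tc / 9) * (X^T *m X) j j.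
  move=> X hWX j.
  set Z := Sqi *m X.
  have hXZ : X = Sq *m Z by rewrite /Z mulmxA hSSi mul1mx.
  clearbody Z.
  have hZ : (Gm tc)^T *m Dm *m Z = 0.
    have : Cmi *m (W^T *m X) = 0 by rewrite hWX mulmx0.
    by rewrite hWt {1}hXZ !mulmxA hCiC mul1mx -(mulmxA _ Sq Sq) hSS.
  have e1 : (Sq *m Z)^T *m (Sqi *m Amat t1 tc ts *m Sqi) *m (Sq *m Z) = Z^T *m Amat t1 tc ts *m Z.
    by rewrite trmx_mul hSqt !mulmxA -(mulmxA _ Sq Sqi) hSSi mulmx1 -(mulmxA _ Sqi Sq) hSiS mulmx1.
  have e2 : (Sq *m Z)^T *m (Sq *m Z) = Z^T *m Dm *m Z.
    by rewrite trmx_mul hSqt !mulmxA -(mulmxA _ Sq Sq) hSS.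
  rewrite hNE hXZ e1 e2.
  exact: (@C3 R t1 tc ts (l3 tc - tc / 9) hsum hc01 ht1 hP hQ hPQ hm0 Z hZ j).
have [e0 e1 e2 hz] := @mat_ident R (normAdj t1 tc ts) V mu W (l3 tc) (l3 tc - tc / 9)
   hV hN hsort hWW hNW hX hml hl1.
split.
  have w0 : widen_ord (isT : (3 <= 6)%N) k0 = o0 by apply: val_inj.
  have w1 : widen_ord (isT : (3 <= 6)%N) k1 = o1 by apply: val_inj.
  have w2 : widen_ord (isT : (3 <= 6)%N) k2 = o2 by apply: val_inj.
  have p2 : 0 <= 100 * (tc / t1) ^+ 2 by apply: mulr_ge0; [lra|apply: sqr_ge0].
  apply: ord3P.
  - by rewrite w0 e0 /lamhat /= subrr normr0.
  - by rewrite w1 e1 /lamhat /= subrr normr0.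
  - by rewrite w2 e2 /lamhat /=; apply: lam_bound.
apply: le_trans (@sin_le R V W _ hV hz) _.
have hWE : forall i k, W i k = sq i * Gm tc i k * c k.
  by move=> i k; rewrite /W mul_mx_diag mul_diag_mx !mxE.
have r3p : 0 < Num.sqrt (3%:R : R) by rewrite sqrtr_gt0; lra.
have r32 : Num.sqrt (3%:R : R) ^+ 2 = 3%:R by rewrite sqr_sqrtr //; lra.
have hn : forall k, \sum_(l < 6) Uhat R l k ^+ 2 = if val k == 0%N then 2 else 8.
  apply: ord3P; rewrite sum6 /Uhat !mxE /= ?sqrrN ?r32; ring.
have hM : forall i k, (colnormalize (Uhat R) - W) i k =
    Uhat R i k / Num.sqrt (if val k == 0%N then 2 else 8) - sq i * Gm tc i k * c k.
  by move=> i k; rewrite mxE [(- W) i k]mxE hWE [colnormalize _ i k]mxE hn.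
have q0 := sq2 o0; have q2 := sq2 o2.
rewrite /dg /= in q0 q2.
have HH : forall x y : R, x = y -> x <= y by move=> x y ->.
have hS : \sum_(i < 6) \sum_(j < 3) (colnormalize (Uhat R) - W) i j ^+ 2 <= (2 * tc) ^+ 2.
  rewrite sum6 !sum3 !hM /Uhat /Gm !mxE /= /c /=.
  rewrite -q0 -q2.
  apply: (le_trans (y := (4 * (Num.sqrt 3%:R - sq o0) ^+ 2 + 4 * (1 - sq o2) ^+ 2) / Num.sqrt 8 ^+ 2)).
    by apply: HH; field; rewrite !sqn0 !gt_eqF.
  rewrite r82.
  have s0p := sqpos o0; have s2p := sqpos o2.
  have r31 : 1 <= Num.sqrt (3%:R : R) by nra.
  have u1 : (Num.sqrt 3%:R - sq o0) * (Num.sqrt 3%:R + sq o0) = 2 * tc.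
    have -> : (Num.sqrt 3%:R - sq o0) * (Num.sqrt 3%:R + sq o0) = Num.sqrt 3%:R ^+ 2 - sq o0 ^+ 2 by ring.
    rewrite r32 q0; lra.
  have w1 : (1 - sq o2) * (1 + sq o2) = - (2 * tc).
    have -> : (1 - sq o2) * (1 + sq o2) = 1 - sq o2 ^+ 2 by ring.
    rewrite q2; lra.
  have ub : (Num.sqrt 3%:R - sq o0) ^+ 2 <= (2 * tc) ^+ 2.
    rewrite -u1 exprMn; rewrite -[X in X <= _]mulr1; apply: ler_wpM2l; first exact: sqr_ge0.
    rewrite expr2; nra.
  have wb : (1 - sq o2) ^+ 2 <= (2 * tc) ^+ 2.
    have -> : (2 * tc) ^+ 2 = (- (2 * tc)) ^+ 2 by rewrite sqrrN.
    rewrite -w1 exprMn; rewrite -[X in X <= _]mulr1; apply: ler_wpM2l; first exact: sqr_ge0.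
    rewrite expr2; nra.
  lra.
rewrite /frob; apply: le_trans (ler_wsqrtr hS) _.
rewrite sqrtr_sqr ger0_norm; last lra.
lra.
Qed.
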